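(* Let $k\ge 2$ be an integer, $p$ a prime and $a$ a positive integer, and let $n=p^a$. If $a$ is $k$-perfect (i.e. $\sigma(a)=ka$), then $n$ is $k$-multiplicatively $e$-perfect, i.e. $T_e(n)=n^k$. If $a$ is $k$-superperfect (i.e. $\sigma(\sigma(a))=ka$), then $n$ is $k$-multiplicatively $e$-superperfect, i.e. $T_e(T_e(n))=n^k$.
   Context: $\sigma(m)$ is the sum of the positive divisors of $m$. For $n=p_1^{a_1}\cdots p_r^{a_r}>1$ (prime factorization), a divisor $d=p_1^{b_1}\cdots p_r^{b_r}$ of $n$ is an exponential divisor ($e$-divisor) if $b_i\mid a_i$ for all $i$; $T_e(n)$ denotes the product of all $e$-divisors of $n$. *)

(* Defs.v *)
From mathcomp Require Import all_boot.

Set Implicit Arguments.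
Unset Strict Implicit.
Unset Printing Implicit Defensive.

Definition sigma (m : nat) : nat := \sum_(d <- divisors m) d.

(* d is an exponential divisor of n: d | n and for every prime p | n,
   the exponent of p in d divides the exponent of p in n
   (b_i | a_i; since a_i >= 1 this forces b_i >= 1). *)
Definition is_edivisor (d n : nat) : bool :=
  (d %| n) && all (fun q => logn q d %| logn q n) (primes n).

Definition edivisors (n : nat) : seq nat :=
  [seq d <- divisors n | is_edivisor d n].

Definition Te (n : nat) : nat := \prod_(d <- edivisors n) d.

(* Main.v *)
Require Import Defs.
From mathcomp Require Import all_boot.

Lemma Te_pow (p n : nat) : prime p -> 0 < n -> Te (p ^ n) = p ^ sigma n.
Proof.
move=> pp n0.
have p1 : 1 < p by exact: prime_gt1.
rewrite /Te /sigma expn_sum.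
have -> : \prod_(d <- divisors n) p ^ d = \prod_(d <- [seq p ^ b | b <- divisors n]) d.
  by rewrite big_map.
apply: perm_big.
apply: uniq_perm.
- by rewrite filter_uniq // divisors_uniq.
- rewrite map_inj_uniq ?divisors_uniq //; exact: expnI.
move=> d; rewrite mem_filter /is_edivisor primesX // primes_prime //= andbT.
rewrite -dvdn_divisors ?expn_gt0 ?prime_gt0 //.
apply/idP/idP.
- move=> /andP [/andP [Hd Hl] _]; have [m le_mn Ed] := elimT (dvdn_pfactor d n pp) Hd; subst d.
  rewrite !pfactorK // in Hl.
  by apply/mapP; exists m => //; rewrite -dvdn_divisors.
- case/mapP => m; rewrite -dvdn_divisors // => mn ->.
  rewrite !pfactorK // mn andbT andbb.
  by apply/dvdn_pfactor => //; exists m => //; exact: dvdn_leq.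
Qed.

Lemma sigma_gt0 n : 0 < n -> 0 < sigma n.
Proof.
move=> n0; rewrite /sigma (bigD1_seq n) ?divisors_uniq //=.
  by rewrite ltn_addr.
by rewrite -dvdn_divisors.
Qed.

Theorem mainTheorem3 (k p a : nat) :
  2 <= k -> prime p -> 0 < a ->
  (sigma a = k * a -> Te (p ^ a) = (p ^ a) ^ k) /\
  (sigma (sigma a) = k * a -> Te (Te (p ^ a)) = (p ^ a) ^ k).
Proof.
move=> k2 pp a0; split => H.
  by rewrite Te_pow // H -expnM mulnC.
by rewrite Te_pow // Te_pow ?sigma_gt0 // H -expnM mulnC.
Qed.
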